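(* Let $\mathcal{P} \subseteq \{2,3,4,\dots\}$ be nonempty and suppose $\rho(\mathcal{P})$ (defined in the context) exists. Then for every integer $n \geq 1$, $$H(n,\mathcal{P}) \leq n^{\rho(\mathcal{P})}.$$
   Context: For $\mathcal{P} \subseteq \{2,3,\dots\}$, $H(n,\mathcal{P})$ denotes the number of ordered factorizations of $n$ into factors that all belong to $\mathcal{P}$: $H(1,\mathcal{P})=1$ and, for $n\ge 2$, $H(n,\mathcal{P})=\sum_{k\ge1} \#\{(d_1,\dots,d_k): d_1\cdots d_k=n,\ d_i\in\mathcal{P}\}$. Equivalently, $H(n,\mathcal{P})=\sum_{d\mid n,\ d\in\mathcal{P}} H(n/d,\mathcal{P})$ for $n\ge2$. Let $\zeta_\mathcal{P}(s)=\sum_{m\in\mathcal{P}} m^{-s}$ with abscissa of convergence $\sigma_\mathcal{P}$ ($\sigma_\mathcal{P}=-\infty$ if $\mathcal{P}$ is finite). For real $s\ge 0$ in the region of convergence, $\zeta_\mathcal{P}(s)$ is strictly decreasing and tends to $0$ as $s\to\infty$; $\rho(\mathcal{P})$ denotes the unique real $s\geq 0$ (with $s>\sigma_\mathcal{P}$, or at which the series converges) such that $\zeta_\mathcal{P}(s)=1$. *)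

(* Defs.v *)
From Stdlib Require Import Reals Arith List.
From Coquelicot Require Import Coquelicot.
Import ListNotations.
Open Scope R_scope.

(* Fuel-based evaluation of the recursion
   H(1) = 1,  H(n) = sum_{d | n, d in P} H(n/d)  (n >= 2).
   Divisors d of n in P satisfy 2 <= d <= n when P ⊆ {2,3,...}. *)
Fixpoint Hfuel (P : nat -> bool) (fuel n : nat) : nat :=
  match fuel with
  | O => if Nat.eqb n 1 then 1%nat else 0%nat
  | S f =>
      if Nat.eqb n 1 then 1%nat
      else fold_right Nat.add 0%nat
             (map (fun d => if andb (Nat.eqb (n mod d) 0) (P d)
                            then Hfuel P f (n / d) else 0%nat)
                  (seq 2 (n - 1)))
  end.

(* H(n,P): the number of ordered factorizations of n into factors in P.
   Each factor is >= 2, so recursion depth is < n and fuel n suffices. *)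
Definition H (P : nat -> bool) (n : nat) : nat := Hfuel P n n.

(* The summand sequence of zeta_P(s) = sum_{m in P} m^{-s}. *)
Definition zetaP_term (P : nat -> bool) (s : R) (m : nat) : R :=
  if P m then Rpower (INR m) (- s) else 0.

Example H_test : H (fun m => Nat.leb 2 m) 12 = 8%nat. Proof. reflexivity. Qed.

(* Main.v *)
Require Import Defs.
From Stdlib Require Import Reals Arith List Lia Lra.
From Coquelicot Require Import Coquelicot.
Open Scope R_scope.

Definition lsum (l : list R) : R := fold_right Rplus 0 l.

Lemma lsum_app l1 l2 : lsum (l1 ++ l2) = lsum l1 + lsum l2.
Proof. induction l1 as [|x l IH]; simpl; unfold lsum in *; simpl; try rewrite IH; ring. Qed.

Lemma INR_fold (g : nat -> nat) l :
  INR (fold_right Nat.add 0%nat (map g l)) = lsum (map (fun x => INR (g x)) l).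
Proof. induction l as [|x l IH]; simpl; auto. rewrite plus_INR, IH. reflexivity. Qed.

Lemma lsum_le (f g : nat -> R) l : (forall x, In x l -> f x <= g x) ->
  lsum (map f l) <= lsum (map g l).
Proof.
  induction l as [|x l IH]; intros H; unfold lsum; simpl. lra.
  apply Rplus_le_compat. apply H; left; auto. apply IH; intros; apply H; right; auto.
Qed.

Lemma lsum_scal c (a : nat -> R) l : lsum (map (fun x => c * a x) l) = c * lsum (map a l).
Proof. induction l as [|x l IH]; unfold lsum in *; simpl. ring. rewrite IH; ring. Qed.

Lemma lsum_nonneg (a : nat -> R) l : (forall x, 0 <= a x) -> 0 <= lsum (map a l).
Proof. intros H; induction l as [|x l IH]; unfold lsum in *; simpl. lra. specialize (H x); lra. Qed.

Lemma lsum_sum_n (a : nat -> R) k : lsum (map a (seq 0 (S k))) = sum_n a k.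
Proof.
  induction k as [|k IH].
  - unfold lsum; simpl. rewrite sum_O. ring.
  - rewrite seq_S, map_app, lsum_app, IH, sum_Sn. unfold lsum; simpl. unfold plus; simpl. ring.
Qed.

Lemma Hfuel_S P f n : Hfuel P (S f) n =
  if Nat.eqb n 1 then 1%nat
  else fold_right Nat.add 0%nat
         (map (fun d => if andb (Nat.eqb (n mod d) 0) (P d)
                        then Hfuel P f (n / d) else 0%nat)
              (seq 2 (n - 1))).
Proof. reflexivity. Qed.

Lemma Rpower_pos x r : 0 < Rpower x r.
Proof. unfold Rpower; apply exp_pos. Qed.

Theorem lemma2p1 (P : nat -> bool)
  (HP2 : forall m : nat, P m = true -> (2 <= m)%nat)
  (Hne : exists m : nat, P m = true)
  (rho : R) (Hrho0 : 0 <= rho)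
  (Hrho : is_series (zetaP_term P rho) 1) :
  forall n : nat, (1 <= n)%nat -> INR (H P n) <= Rpower (INR n) rho.
Proof.
  assert (Znn : forall d, 0 <= zetaP_term P rho d).
  { intros d; unfold zetaP_term; destruct (P d); [left; apply Rpower_pos | lra]. }
  assert (Zle : forall k, sum_n (zetaP_term P rho) k <= 1).
  { intros k. apply (growing_ineq (sum_n (zetaP_term P rho))).
    - intros m. rewrite sum_Sn. unfold plus; simpl. specialize (Znn (S m)); lra.
    - apply is_lim_seq_Reals. exact Hrho. }
  assert (R1 : Rpower 1 rho = 1).
  { unfold Rpower. rewrite ln_1, Rmult_0_r, exp_0. reflexivity. }
  assert (main : forall f n, (1 <= n)%nat -> INR (Hfuel P f n) <= Rpower (INR n) rho).
  { induction f as [|f IH]; intros n Hn.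
    - simpl. destruct (Nat.eqb_spec n 1) as [->|Hn1].
      + simpl. rewrite R1. lra.
      + simpl. left; apply Rpower_pos.
    - rewrite Hfuel_S. destruct (Nat.eqb_spec n 1) as [->|Hn1].
      + simpl. rewrite R1. lra.
      + rewrite INR_fold.
        apply Rle_trans with
          (lsum (map (fun d => Rpower (INR n) rho * zetaP_term P rho d) (seq 2 (n - 1)))).
        * apply lsum_le. intros d Hd. apply in_seq in Hd.
          destruct (Nat.eqb_spec (n mod d) 0) as [Hm|Hm]; simpl;
            [destruct (P d) eqn:HPd|].
          -- assert (Hdiv : n = (d * (n / d))%nat).
             { apply Nat.Div0.div_exact. exact Hm. }
             assert (Hq : (1 <= n / d)%nat).
             { destruct (n / d)%nat eqn:E; [|lia]. rewrite Nat.mul_0_r in Hdiv. lia. }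
             eapply Rle_trans; [apply IH; exact Hq|].
             unfold zetaP_term; rewrite HPd.
             assert (Hnd : INR n = INR d * INR (n / d)).
             { rewrite <- mult_INR. f_equal. exact Hdiv. }
             assert (Hd0 : 0 < INR d) by (apply lt_0_INR; lia).
             assert (Hq0 : 0 < INR (n / d)) by (apply lt_0_INR; lia).
             rewrite Hnd, <- Rpower_mult_distr by assumption.
             rewrite Rmult_comm, <- Rmult_assoc, <- Rpower_plus.
             replace (- rho + rho) with 0 by ring. rewrite Rpower_O by assumption. lra.
          -- simpl. apply Rmult_le_pos; [left; apply Rpower_pos|apply Znn].
          -- simpl. apply Rmult_le_pos; [left; apply Rpower_pos|apply Znn].
        * rewrite lsum_scal.
          rewrite <- (Rmult_1_r (Rpower (INR n) rho)) at 2.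
          apply Rmult_le_compat_l; [left; apply Rpower_pos|].
          apply Rle_trans with (lsum (map (zetaP_term P rho) (seq 0 (S n)))).
          -- replace (S n) with (2 + (n - 1))%nat by lia.
             rewrite seq_app, map_app, lsum_app.
             pose proof (lsum_nonneg (zetaP_term P rho) (seq 0 2) Znn). change (0 + 2)%nat with 2%nat. lra.
          -- rewrite lsum_sum_n. apply Zle. }
  intros n Hn. apply main; exact Hn.
Qed.
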